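(* There exist an open interval $(\theta^-,\theta^+)$ containing $0$ and a unique continuously differentiable function $\gamma:(\theta^-,\theta^+)\to\mathbb{R}$ with $\gamma(0)=0$ such that $f_{\mathrm{comp}}(\gamma(\theta),\theta)=0$ and $\mathbf{f}_{\mathrm{mv}}(\gamma(\theta),\theta)>\mathbf{0}$ (componentwise) for all $\theta\in(\theta^-,\theta^+)$. Moreover $\gamma$ is analytic and $$\gamma'(\theta)=\frac{|\mathbf{t}_1^r|}{|\mathbf{t}_4^r|}\,\frac{\mathbf{t}_2^d(\gamma(\theta))\cdot(\mathbf{t}_3^d(\theta)\times\mathbf{t}_4^r)}{\mathbf{t}_1^r\cdot(\mathbf{t}_2^d(\gamma(\theta))\times\mathbf{t}_3^d(\theta))}.$$
   Context: Fix $\mathbf{t}_1^r,\dots,\mathbf{t}_4^r\in\mathbb{R}^3$ with $\mathbf{t}_i^r\cdot(\mathbf{t}_j^r\times\mathbf{t}_k^r)\neq0$ for $ijk\in\{123,234,341,412\}$. For nonzero $\mathbf{t}\in\mathbb{R}^3$ and $\varphi\in\mathbb{R}$ let $\mathbf{R}_{\mathbf{t}}(\varphi):=|\mathbf{t}|^{-2}\mathbf{t}\otimes\mathbf{t}+\cos\varphi(\mathbf{I}-|\mathbf{t}|^{-2}\mathbf{t}\otimes\mathbf{t})+|\mathbf{t}|^{-1}\sin\varphi(\mathbf{t}\times)$ (counterclockwise rotation about $\mathbf{t}$ by $\varphi$), where $(\mathbf{a}\times)\mathbf{b}=\mathbf{a}\times\mathbf{b}$. Set $\mathbf{t}_1^d:=\mathbf{t}_1^r$,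 $\mathbf{t}_4^d:=\mathbf{t}_4^r$, $\mathbf{t}_2^d(\gamma):=\mathbf{R}_{\mathbf{t}_1^r}(\gamma)\mathbf{t}_2^r$, $\mathbf{t}_3^d(\theta):=\mathbf{R}_{\mathbf{t}_4^r}(\theta)\mathbf{t}_3^r$. Define $f_{\mathrm{comp}}(\gamma,\theta):=\mathbf{t}_2^d(\gamma)\cdot\mathbf{t}_3^d(\theta)-\mathbf{t}_2^r\cdot\mathbf{t}_3^r$ and $\mathbf{f}_{\mathrm{mv}}(\gamma,\theta)\in\mathbb{R}^4$ with components $[\mathbf{t}_1^d\cdot(\mathbf{t}_2^d(\gamma)\times\mathbf{t}_3^d(\theta))][\mathbf{t}_1^r\cdot(\mathbf{t}_2^r\times\mathbf{t}_3^r)]$, $[\mathbf{t}_2^d(\gamma)\cdot(\mathbf{t}_3^d(\theta)\times\mathbf{t}_4^d)][\mathbf{t}_2^r\cdot(\mathbf{t}_3^r\times\mathbf{t}_4^r)]$, $[\mathbf{t}_3^d(\theta)\cdot(\mathbf{t}_4^d\times\mathbf{t}_1^d)][\mathbf{t}_3^r\cdot(\mathbf{t}_4^r\times\mathbf{t}_1^r)]$, $[\mathbf{t}_4^d\cdot(\mathbf{t}_1^d\times\mathbf{t}_2^d(\gamma))][\mathbf{t}_4^r\cdot(\mathbf{t}_1^r\times\mathbf{t}_2^r)]$. *)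

(* Defs.v *)
From Stdlib Require Import Reals.
From Coquelicot Require Import Coquelicot.
Open Scope R_scope.

Definition vec3 : Type := (R * R * R)%type.
Definition vx (v : vec3) : R := fst (fst v).
Definition vy (v : vec3) : R := snd (fst v).
Definition vz (v : vec3) : R := snd v.
Definition mkv (a b c : R) : vec3 := (a, b, c).

Definition dot (u v : vec3) : R := vx u * vx v + vy u * vy v + vz u * vz v.
Definition cross (u v : vec3) : vec3 :=
  mkv (vy u * vz v - vz u * vy v)
      (vz u * vx v - vx u * vz v)
      (vx u * vy v - vy u * vx v).
Definition vadd (u v : vec3) : vec3 := mkv (vx u + vx v) (vy u + vy v) (vz u + vz v).
Definition vscal (a : R) (v : vec3) : vec3 := mkv (a * vx v) (a * vy v) (a * vz v).
Definition vnorm (v : vec3) : R := sqrt (dot v v).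
Definition triple (a b c : vec3) : R := dot a (cross b c).

Definition rot (t : vec3) (phi : R) (v : vec3) : vec3 :=
  let p := vscal (dot t v / (vnorm t ^ 2)) t in
  vadd p (vadd (vscal (cos phi) (vadd v (vscal (-1) p)))
               (vscal (sin phi / vnorm t) (cross t v))).

Section Config.
Variables t1 t2 t3 t4 : vec3.
Definition t2d (g : R) : vec3 := rot t1 g t2.
Definition t3d (th : R) : vec3 := rot t4 th t3.
Definition f_comp (g th : R) : R := dot (t2d g) (t3d th) - dot t2 t3.
(* the four components of f_mv (t1^d = t1, t4^d = t4) *)
Definition f_mv1 (g th : R) : R := triple t1 (t2d g) (t3d th) * triple t1 t2 t3.
Definition f_mv2 (g th : R) : R := triple (t2d g) (t3d th) t4 * triple t2 t3 t4.
Definition f_mv3 (g th : R) : R := triple (t3d th) t4 t1 * triple t3 t4 t1.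
Definition f_mv4 (g th : R) : R := triple t4 t1 (t2d g) * triple t4 t1 t2.
Definition f_mv_pos (g th : R) : Prop :=
  0 < f_mv1 g th /\ 0 < f_mv2 g th /\ 0 < f_mv3 g th /\ 0 < f_mv4 g th.
End Config.

Definition C1_on (f : R -> R) (a b : R) : Prop :=
  forall x, a < x < b -> ex_derive f x /\ continuous (Derive f) x.

Definition analytic_on (f : R -> R) (a b : R) : Prop :=
  forall x, a < x < b ->
    exists (c : nat -> R) (r : R), 0 < r /\
      forall y, Rabs (y - x) < r -> is_pseries c (y - x) (f y).

(* Main.v *)
Require Import Defs.
From Stdlib Require Import Reals Lra Lia.
From Coquelicot Require Import Coquelicot.
Open Scope R_scope.
Notation fact := Factorial.fact.

Lemma Dn_S (f : R -> R) n x : Derive_n f (S n) x = Derive_n (Derive f) n x.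
Proof.
  replace (S n) with (n + 1)%nat by lia. rewrite <- Derive_n_comp. reflexivity.
Qed.

Lemma exDn_S_of f n x : ex_derive f x -> ex_derive_n (Derive f) n x -> ex_derive_n f (S n) x.
Proof.
  intros H1 H2. destruct n as [|n]. exact H1.
  simpl in H2 |- *. eapply ex_derive_ext; [|exact H2].
  intros t; simpl. rewrite <- (Dn_S f n t). reflexivity.
Qed.

Lemma exDn_Derive f n x : ex_derive_n f (S n) x -> ex_derive_n (Derive f) n x.
Proof.
  intros H. destruct n as [|n]. exact I.
  simpl in H |- *. eapply ex_derive_ext; [|exact H].
  intros t. rewrite <- (Dn_S f n t). reflexivity.
Qed.

Section Smooth.
Variable U : R -> Prop.
Hypothesis HU : forall x, U x -> locally x U.

Definition sm (V : R -> Prop) n f := forall k x, (k <= n)%nat -> V x -> ex_derive_n f k x.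

Lemma sm_weaken V n f : sm V (S n) f -> sm V n f.
Proof. intros H k x Hk Hx. apply H; auto. Qed.

Lemma sm_Derive V n f : sm V (S n) f -> sm V n (Derive f).
Proof. intros H k x Hk Hx. apply exDn_Derive. apply H; auto; lia. Qed.

Lemma sm_ex V n f x : sm V (S n) f -> V x -> ex_derive f x.
Proof. intros H Hx. exact (H 1%nat x ltac:(lia) Hx). Qed.

Lemma sm_loc n f x : U x -> sm U n f ->
  locally x (fun y => forall k, (k <= n)%nat -> ex_derive_n f k y).
Proof.
  intros Hx H. apply (filter_imp U). intros y Hy k Hk. apply H; auto. apply HU; auto.
Qed.

Lemma loc_U x (P : R -> Prop) : U x -> (forall y, U y -> P y) -> locally x P.
Proof. intros Hx H. apply (filter_imp U); auto. Qed.

Lemma sm_mult n : forall u v, sm U n u -> sm U n v -> sm U n (fun t => u t * v t).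
Proof.
  induction n as [|n IH]; intros u v Hu Hv k x Hk Hx.
  - replace k with 0%nat by lia. exact I.
  - destruct (Compare_dec.le_lt_dec k n) as [Hkn|Hkn].
    + apply IH; auto; apply sm_weaken; auto.
    + replace k with (S n) by lia. apply exDn_S_of.
      * apply ex_derive_mult; eapply sm_ex; eauto.
      * apply (ex_derive_n_ext_loc (fun t => Derive u t * v t + u t * Derive v t)).
        { apply loc_U; auto. intros y Hy. rewrite Derive_mult; auto; eapply sm_ex; eauto. }
        apply ex_derive_n_plus.
        { apply sm_loc; auto. apply IH; [apply sm_Derive|apply sm_weaken]; auto. }
        { apply sm_loc; auto. apply IH; [apply sm_weaken|apply sm_Derive]; auto. }
Qed.

Variable V : R -> Prop.
Variable g : R -> R.
Hypothesis HgUV : forall x, U x -> V (g x).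

Lemma sm_comp n : forall f, sm V n f -> sm U n g -> sm U n (fun t => f (g t)).
Proof.
  induction n as [|n IH]; intros f Hf Hg k x Hk Hx.
  - replace k with 0%nat by lia. exact I.
  - destruct (Compare_dec.le_lt_dec k n) as [Hkn|Hkn].
    + apply IH; auto; apply sm_weaken; auto.
    + replace k with (S n) by lia. apply exDn_S_of.
      * apply ex_derive_comp; eapply sm_ex; eauto.
      * apply (ex_derive_n_ext_loc (fun t => Derive g t * Derive f (g t))).
        { apply loc_U; auto. intros y Hy. rewrite (Derive_comp f g y); auto; eapply sm_ex; eauto. }
        apply (sm_mult n (fun t => Derive g t) (fun t => Derive f (g t))); auto; try lia. apply sm_Derive; auto.
        apply (IH (Derive f)). apply sm_Derive; auto. apply sm_weaken; auto.
Qed.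
End Smooth.

Section Maj.
Variables U W : R -> Prop.
Hypothesis HU : forall x, U x -> locally x U.
Hypothesis HW : forall x, W x -> locally x W.
Variable z : R.
Hypothesis Hz : W z.

Definition maj n p P := forall k x, (k <= n)%nat -> U x -> Rabs (Derive_n p k x) <= Derive_n P k z.

Lemma Dn_mult_split n p q x (X : R -> Prop) : (forall y, X y -> locally y X) -> X x ->
  sm X (S n) p -> sm X (S n) q ->
  Derive_n (fun t => p t * q t) (S n) x =
  Derive_n (fun t => Derive p t * q t) n x + Derive_n (fun t => p t * Derive q t) n x.
Proof.
  intros HX Hx Hp Hq. rewrite Dn_S.
  rewrite (Derive_n_ext_loc _ (fun t => Derive p t * q t + p t * Derive q t)).
  - apply Derive_n_plus.
    + apply (sm_loc X HX); auto. apply (sm_mult X HX); auto; [apply sm_Derive|apply sm_weaken]; auto.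
    + apply (sm_loc X HX); auto. apply (sm_mult X HX); auto; [apply sm_weaken|apply sm_Derive]; auto.
  - apply (loc_U X HX); auto. intros y Hy. apply Derive_mult; eapply sm_ex; eauto.
Qed.

Lemma maj_mult n : forall p q P Q, sm U n p -> sm U n q -> sm W n P -> sm W n Q ->
  maj n p P -> maj n q Q -> maj n (fun t => p t * q t) (fun t => P t * Q t).
Proof.
  induction n as [|n IH]; intros p q P Q Hp Hq HP HQ Mp Mq k x Hk Hx.
  - replace k with 0%nat by lia. simpl. rewrite Rabs_mult.
    apply Rmult_le_compat; try apply Rabs_pos.
    apply (Mp 0%nat x); auto. apply (Mq 0%nat x); auto.
  - destruct k as [|m].
    + simpl. rewrite Rabs_mult.
      apply Rmult_le_compat; try apply Rabs_pos.
      apply (Mp 0%nat x); auto; lia. apply (Mq 0%nat x); auto; lia.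
    + assert (Hm : (m <= n)%nat) by lia.
      rewrite (Dn_mult_split m p q x U); auto; try (intros i y Hi Hy; apply Hp || apply Hq; auto; lia).
      rewrite (Dn_mult_split m P Q z W); auto; try (intros i y Hi Hy; apply HP || apply HQ; auto; lia).
      eapply Rle_trans. apply Rabs_triang. apply Rplus_le_compat.
      * apply (IH (Derive p) q (Derive P) Q); auto.
        apply sm_Derive; auto. apply sm_weaken; auto. apply sm_Derive; auto. apply sm_weaken; auto.
        intros i y Hi Hy. rewrite <- !Dn_S. apply Mp; auto; lia.
        intros i y Hi Hy. apply Mq; auto; lia.
      * apply (IH p (Derive q) P (Derive Q)); auto.
        apply sm_weaken; auto. apply sm_Derive; auto. apply sm_weaken; auto. apply sm_Derive; auto.
        intros i y Hi Hy. apply Mp; auto; lia.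
        intros i y Hi Hy. rewrite <- !Dn_S. apply Mq; auto; lia.
Qed.

Variables V V' : R -> Prop.
Variables g G : R -> R.
Hypothesis HgUV : forall x, U x -> V (g x).
Hypothesis HGWV : forall x, W x -> V' (G x).

Lemma Dn_comp_split n f x (X Y : R -> Prop) h : (forall y, X y -> locally y X) -> X x ->
  (forall y, X y -> Y (h y)) ->
  sm Y (S n) f -> sm X (S n) h ->
  Derive_n (fun t => f (h t)) (S n) x =
  Derive_n (fun t => Derive h t * Derive f (h t)) n x.
Proof.
  intros HX Hx HXY Hf Hh. rewrite Dn_S. apply Derive_n_ext_loc.
  apply (loc_U X HX); auto. intros y Hy. apply (Derive_comp f h y); eapply sm_ex; eauto.
Qed.

Lemma maj_comp n : forall f F, sm V n f -> sm V' n F -> sm U n g -> sm W n G ->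
  (forall k y, (k <= n)%nat -> V y -> Rabs (Derive_n f k y) <= Derive_n F k (G z)) ->
  (forall k x, (1 <= k <= n)%nat -> U x -> Rabs (Derive_n g k x) <= Derive_n G k z) ->
  maj n (fun t => f (g t)) (fun t => F (G t)).
Proof.
  induction n as [|n IH]; intros f F Hf HF Hg HG Bf Bg k x Hk Hx.
  - replace k with 0%nat by lia. simpl. apply (Bf 0%nat); auto.
  - destruct k as [|m].
    + simpl. apply (Bf 0%nat); auto; lia.
    + rewrite (Dn_comp_split m f x U V g); auto; try (intros i y Hi Hy; apply Hf || apply Hg; auto; lia).
      rewrite (Dn_comp_split m F z W V' G); auto; try (intros i y Hi Hy; apply HF || apply HG; auto; lia).
      apply (maj_mult n (Derive g) (fun t => Derive f (g t)) (Derive G) (fun t => Derive F (G t))); auto; try lia.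
      * apply sm_Derive; auto.
      * apply (sm_comp U HU V g HgUV n (Derive f)). apply sm_Derive; auto. apply sm_weaken; auto.
      * apply sm_Derive; auto.
      * apply (sm_comp W HW V' G HGWV n (Derive F)). apply sm_Derive; auto. apply sm_weaken; auto.
      * intros i y Hi Hy. rewrite <- !Dn_S. apply Bg; auto; lia.
      * apply IH. apply sm_Derive; auto. apply sm_Derive; auto. apply sm_weaken; auto. apply sm_weaken; auto.
        intros i y Hi Hy. rewrite <- !Dn_S. apply Bf; auto; lia.
        intros i y Hi Hy. apply Bg; auto; lia.
Qed.
End Maj.

Lemma loc_aff_neq D E h : D - E*h <> 0 -> locally h (fun t => D - E*t <> 0).
Proof.
  intros H. assert (Hp : 0 < Rabs (D - E*h) / (Rabs E + 1)).
  { apply Rdiv_lt_0_compat. apply Rabs_pos_lt; auto. pose proof (Rabs_pos E); lra. }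
  exists (mkposreal _ Hp). intros t Ht. simpl in Ht. unfold ball in Ht; simpl in Ht.
  unfold AbsRing_ball, abs, minus, plus, opp in Ht; simpl in Ht.
  intros Hc. assert (Rabs (D - E*h) = Rabs (E * (t - h))) by (f_equal; lra).
  rewrite Rabs_mult in H0.
  assert (Rabs (t - h) * (Rabs E + 1) < Rabs (D - E*h)).
  { apply (Rmult_lt_compat_r (Rabs E + 1)) in Ht. unfold Rdiv in Ht.
    rewrite Rmult_assoc, Rinv_l, Rmult_1_r in Ht. exact Ht. pose proof (Rabs_pos E); lra.
    pose proof (Rabs_pos E); lra. }
  pose proof (Rabs_pos (t-h)). pose proof (Rabs_pos E). nra.
Qed.

Lemma is_derive_ratpow K D E h n : D - E*h <> 0 ->
  is_derive (fun t => K / (D - E*t)^(S n)) h (K * INR (S n) * E / (D - E*h)^(S (S n))).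
Proof.
  intros H. auto_derive.
  - apply Rmult_integral_contrapositive_currified. lra. apply pow_nonzero. lra.
  - change (match n with 0%nat => 1 | S _ => INR n + 1 end) with (INR (S n)).
    simpl. replace (D + - (E*h)) with (D - E*h) by ring.
    assert (HP : (D - E*h)^n <> 0) by (apply pow_nonzero; lra).
    set (P := (D - E*h)^n) in *. set (m := match n with 0%nat => 1 | S _ => INR n + 1 end).
    field. split; auto.
Qed.

Lemma rat_dn b D E : forall n h, D - E*h <> 0 ->
  ex_derive_n (fun t => b / (D - E*t)) n h /\
  Derive_n (fun t => b / (D - E*t)) n h = b * INR (Factorial.fact n) * E^n / (D - E*h)^(S n).
Proof.
  induction n as [|n IH]; intros h Hh.
  - split. exact I. simpl. field. lra.
  - assert (Hloc : locally h (fun t => b * INR (Factorial.fact n) * E^n / (D - E*t)^(S n)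
                                      = Derive_n (fun t => b / (D - E*t)) n t)).
    { apply (filter_imp (fun t => D - E*t <> 0)). intros t Ht. symmetry. apply IH; auto.
      apply loc_aff_neq; auto. }
    pose proof (is_derive_ratpow (b * INR (Factorial.fact n) * E^n) D E h n Hh) as Hd.
    split.
    + simpl. eapply ex_derive_ext_loc. exact Hloc. eexists. exact Hd.
    + change (Derive (Derive_n (fun t => b / (D - E*t)) n) h = b * INR (Factorial.fact (S n)) * E^(S n) / (D - E*h)^(S (S n))). rewrite <- (Derive_ext_loc _ _ _ Hloc). etransitivity; [exact (is_derive_unique _ _ _ Hd)|].
      rewrite fact_simpl, mult_INR. simpl.
      assert (HP : (D - E*h)^n <> 0) by (apply pow_nonzero; lra).
      set (P := (D - E*h)^n) in *. set (Q := E^n). set (m := INR (Factorial.fact n)). set (m2 := match n with 0%nat => 1 | S _ => INR n + 1 end).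
      field. split; auto.
Qed.

Definition Bl (x0 r : R) (y : R) : Prop := Rabs (y - x0) < r.

Lemma Bl_open x0 r : forall y, Bl x0 r y -> locally y (Bl x0 r).
Proof.
  intros y Hy. unfold Bl in *. assert (Hp : 0 < r - Rabs (y - x0)) by lra.
  exists (mkposreal _ Hp). intros t Ht. unfold ball in Ht; simpl in Ht.
  unfold AbsRing_ball, abs, minus, plus, opp in Ht; simpl in Ht.
  replace (t - x0) with ((t - y) + (y - x0)) by ring.
  eapply Rle_lt_trans. apply Rabs_triang. unfold Rminus at 1. lra.
Qed.

Definition DB (f : R -> R) (x0 : R) : Prop :=
  exists r rho M, 0 < r /\ 0 < rho /\ 0 < M /\
    forall n y, Rabs (y - x0) < r ->
    ex_derive_n f n y /\ Rabs (Derive_n f n y) <= M * INR (fact n) / rho ^ n.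

Lemma fact_pos n : 0 < INR (fact n).
Proof. apply INR_fact_lt_0. Qed.

Lemma DB_cont_bound g x0 r rho N x :
  0 < rho -> (forall n y, Rabs (y - x0) < r ->
    ex_derive_n g n y /\ Rabs (Derive_n g n y) <= N * INR (fact n) / rho ^ n) ->
  Rabs (x - x0) < r -> Rabs (g x - g x0) <= N / rho * Rabs (x - x0).
Proof.
  intros Hrho H Hx. apply (bounded_variation g (Derive g)).
  intros t Ht. assert (Rabs (t - x0) < r) by lra. destruct (H 1%nat t H0) as [H1 H2].
  split. apply Derive_correct. exact H1. eapply Rle_trans; [exact H2|]. simpl. right. field. lra.
Qed.

Lemma Dn_plus_const c f n x (X : R -> Prop) : (forall y, X y -> locally y X) -> X x ->
  (forall k y, X y -> ex_derive_n f k y) ->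
  Derive_n (fun t => c + f t) n x = (match n with O => c | _ => 0 end) + Derive_n f n x.
Proof.
  intros HX Hx Hf. rewrite Derive_n_plus.
  - destruct n. reflexivity. rewrite Derive_n_const. reflexivity.
  - apply filter_forall. intros y k _. apply ex_derive_n_const.
  - apply (filter_imp X). intros y Hy k _. apply Hf; auto. apply HX; auto.
Qed.

Lemma small_ne D E h : 0 < D -> 0 < E -> Rabs h < D / (2 * E) -> D - E * h <> 0.
Proof.
  intros HD HE H. assert (Rabs (E*h) < D / 2).
  { rewrite Rabs_mult, Rabs_right by lra. apply (Rmult_lt_compat_l E) in H; auto.
    replace (E * (D / (2*E))) with (D/2) in H by (field; lra). lra. }
  apply Rabs_def2 in H0. lra.
Qed.

Lemma DB_comp f g x0 : DB g x0 -> DB f (g x0) -> DB (fun t => f (g t)) x0.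
Proof.
  intros [r2 [rho2 [N [Hr2 [Hrho2 [HN Hg]]]]]] [r1 [rho1 [M [Hr1 [Hrho1 [HM Hf]]]]]].
  set (r := Rmin r2 (r1 * rho2 / (N + 1))).
  assert (Hr : 0 < r). { apply Rmin_pos; auto. apply Rdiv_lt_0_compat; [nra|lra]. }
  set (U := Bl x0 r). set (V := Bl (g x0) r1).
  assert (HUV : forall x, U x -> V (g x)).
  { intros x Hx. unfold U, V, Bl in *. assert (Hx2 : Rabs (x - x0) < r2).
    { eapply Rlt_le_trans; [exact Hx|apply Rmin_l]. }
    pose proof (DB_cont_bound g x0 r2 rho2 N x Hrho2 Hg Hx2).
    assert (Rabs (x - x0) < r1 * rho2 / (N + 1)) by (eapply Rlt_le_trans; [exact Hx|apply Rmin_r]).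
    assert (N / rho2 * Rabs (x - x0) < r1).
    { apply (Rmult_lt_reg_l (rho2 / N)). apply Rdiv_lt_0_compat; lra.
    replace (rho2 / N * (N / rho2 * Rabs (x - x0))) with (Rabs (x - x0)) by (field; lra).
    eapply Rlt_le_trans. exact H0.
    replace (rho2 / N * r1) with (r1*rho2 * /N) by (field; lra). unfold Rdiv. apply Rmult_le_compat_l. nra. apply Rinv_le_contravar; lra. }
    lra. }
  set (D := rho1 * rho2). set (E := rho1 + N).
  set (eps := Rmin (rho2 / 2) (D / (2 * E))).
  assert (HE : 0 < E) by (unfold E; lra). assert (HD : 0 < D) by (unfold D; nra).
  assert (Heps : 0 < eps). { apply Rmin_pos; [lra|apply Rdiv_lt_0_compat; lra]. }
  set (W := Bl 0 eps). set (V' := Bl N rho1).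
  set (F := fun y => M * rho1 / (rho1 + N - 1 * y)).
  set (G := fun h => N * rho2 / (rho2 - 1 * h)).
  assert (HWb : forall h, W h -> Rabs h < rho2 / 2 /\ Rabs h < D / (2 * E)).
  { intros h Hh. unfold W, Bl in Hh. rewrite Rminus_0_r in Hh. split; eapply Rlt_le_trans; eauto.
    apply Rmin_l. apply Rmin_r. }
  assert (HGW : forall h, W h -> rho2 - 1 * h <> 0).
  { intros h Hh. destruct (HWb h Hh). apply Rabs_def2 in H. lra. }
  assert (HWV : forall h, W h -> V' (G h)).
  { intros h Hh. destruct (HWb h Hh) as [H1 H2]. unfold V', Bl, G.
    pose proof (Rabs_def2 _ _ H1) as [H3 H4].
    replace (N * rho2 / (rho2 - 1 * h) - N) with (N * h / (rho2 - h)) by (field; lra).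
    unfold Rdiv. rewrite !Rabs_mult, Rabs_inv, (Rabs_right N), (Rabs_right (rho2 - h)) by lra.
    apply (Rmult_lt_reg_r (rho2 - h)). lra. rewrite Rmult_assoc, Rinv_l, Rmult_1_r by lra.
    assert (Rabs h * E < D / 2).
    { apply (Rmult_lt_compat_r E) in H2; auto. replace (D / (2 * E) * E) with (D / 2) in H2 by (field; lra). lra. }
    unfold E, D in H. pose proof (Rabs_pos h). nra. }
  assert (smf : forall n, sm V n f).
  { intros n k y _ Hy. apply Hf. exact Hy. }
  assert (smg : forall n, sm U n g).
  { intros n k y _ Hy. apply Hg. unfold U, Bl in Hy. eapply Rlt_le_trans; eauto. apply Rmin_l. }
  assert (smF : forall n, sm V' n F).
  { intros n k y _ Hy. apply rat_dn. unfold V', Bl in Hy. apply Rabs_def2 in Hy. lra. }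
  assert (smG : forall n, sm W n G).
  { intros n k y _ Hy. apply rat_dn. apply HGW; auto. }
  assert (HG0 : G 0 = N) by (unfold G; field; lra).
  assert (Hmaj : forall n, maj U 0 n (fun t => f (g t)) (fun t => F (G t))).
  { intros n. apply (maj_comp U W (Bl_open x0 r) (Bl_open 0 eps) 0 ltac:(unfold W, Bl; rewrite Rminus_0_r, Rabs_R0; lra) V V' g G HUV HWV n f F); auto.
    - intros k y _ Hy. rewrite HG0. unfold F. rewrite (proj2 (rat_dn (M*rho1) (rho1+N) 1 k N ltac:(lra))).
    replace (rho1 + N - 1 * N) with rho1 by ring. rewrite pow1.
    destruct (Hf k y Hy) as [_ Hb]. eapply Rle_trans. exact Hb. right.
    simpl. field. split; try lra. apply pow_nonzero; lra.
    - intros k x [Hk _] Hx. unfold G. rewrite (proj2 (rat_dn (N*rho2) rho2 1 k 0 ltac:(lra))).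
    replace (rho2 - 1 * 0) with rho2 by ring. rewrite pow1.
    destruct (Hg k x) as [_ Hb]. unfold U, Bl in Hx. eapply Rlt_le_trans; eauto. apply Rmin_l.
    eapply Rle_trans. exact Hb. right. simpl. field. split; try lra. apply pow_nonzero; lra. }
  set (al := M * rho1 / E). set (be := M * rho1 * rho2 * N / E).
  assert (HDE : forall h, W h -> D - E * h <> 0).
  { intros h Hh. destruct (HWb h Hh) as [_ H2]. apply small_ne; auto. }
  assert (HFG : forall h, W h -> F (G h) = al + be / (D - E * h)).
  { intros h Hh. pose proof (HGW h Hh). destruct (HWb h Hh) as [_ H2].
    assert (D - E * h <> 0) by (apply small_ne; auto).
    unfold F, G, al, be, D, E in *. field. repeat split; try lra.
    all: fail. }
  exists r, (D / E), (al + be / D). repeat split; auto.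
  - apply Rdiv_lt_0_compat; lra.
  - unfold al, be. assert (0 < M * rho1 / E) by (apply Rdiv_lt_0_compat; nra).
    assert (0 < M * rho1 * rho2 * N / E / D). { apply Rdiv_lt_0_compat; auto. apply Rdiv_lt_0_compat; auto.
    repeat apply Rmult_lt_0_compat; lra. } lra.
  - apply (sm_comp U (Bl_open x0 r) V g HUV n f (smf n) (smg n) n y); auto.
  - eapply Rle_trans. apply (Hmaj n n y); auto.
    assert (W 0) by (unfold W, Bl; rewrite Rminus_0_r, Rabs_R0; lra).
    assert (Heq : Derive_n (fun t => F (G t)) n 0 = (match n with O => al | _ => 0 end) + be * INR (fact n) * E^n / (D - E*0)^(S n)).
    { rewrite (Derive_n_ext_loc _ (fun h => al + be / (D - E * h))).
      2:{ apply (filter_imp W). intros; apply HFG; auto. apply Bl_open; auto. }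
      etransitivity. apply (Dn_plus_const al (fun h => be / (D - E * h)) n 0 W (Bl_open 0 eps)); auto.
      intros k t Ht. apply rat_dn. apply HDE; auto.
      f_equal. apply (proj2 (rat_dn be D E n 0 ltac:(specialize (HDE 0 H0); exact HDE))). }
    rewrite Heq.
    rewrite Rmult_0_r, Rminus_0_r.
    assert (Hb : be * INR (fact n) * E ^ n / D ^ S n = be / D * INR (fact n) / (D / E) ^ n).
    { assert (D^n <> 0) by (apply pow_nonzero; lra). assert (E^n <> 0) by (apply pow_nonzero; lra).
      unfold Rdiv. rewrite Rpow_mult_distr, pow_inv. simpl. set (P := D^n) in *. set (Q := E^n) in *. field. repeat split; auto; lra. }
    rewrite Hb. assert (0 < al) by (apply Rdiv_lt_0_compat; nra).
    assert (0 <= be / D * INR (fact n) / (D / E) ^ n).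
    { apply Rmult_le_pos. apply Rmult_le_pos. unfold be. apply Rlt_le, Rdiv_lt_0_compat; auto. apply Rdiv_lt_0_compat; auto. repeat apply Rmult_lt_0_compat; lra.
      apply Rlt_le, fact_pos. apply Rlt_le, Rinv_0_lt_compat, pow_lt, Rdiv_lt_0_compat; lra. }
    destruct n.
    * simpl. lra.
    * rewrite Rplus_0_l. unfold Rdiv. rewrite Rmult_plus_distr_r, Rmult_plus_distr_r.
      assert (0 <= al * INR (fact (S n)) * / (D * / E) ^ S n).
      { apply Rmult_le_pos. apply Rmult_le_pos. lra. apply Rlt_le, fact_pos. apply Rlt_le, Rinv_0_lt_compat, pow_lt. apply Rdiv_lt_0_compat; lra. }
      unfold Rdiv in H1. lra.
Qed.

Lemma inv_pow_mono rho rho' n : 0 < rho -> rho <= rho' -> / rho' ^ n <= / rho ^ n.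
Proof. intros. apply Rinv_le_contravar. apply pow_lt; auto. apply pow_incr; lra. Qed.

Lemma bnd_mono M M' rho rho' n : 0 <= M -> M <= M' -> 0 < rho -> rho <= rho' ->
  M * INR (fact n) / rho' ^ n <= M' * INR (fact n) / rho ^ n.
Proof.
  intros. unfold Rdiv. apply Rmult_le_compat. pose proof (fact_pos n); nra.
  apply Rlt_le, Rinv_0_lt_compat, pow_lt; lra.
  apply Rmult_le_compat_r; auto. apply Rlt_le, fact_pos. apply inv_pow_mono; auto.
Qed.

Lemma DB_ext_loc f g x0 r : 0 < r -> (forall y, Rabs (y - x0) < r -> f y = g y) -> DB g x0 -> DB f x0.
Proof.
  intros Hr Heq [r1 [rho [M [Hr1 [Hrho [HM H]]]]]].
  exists (Rmin r r1), rho, M. repeat split; auto. apply Rmin_pos; auto.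
  - assert (Hy1 : Rabs (y - x0) < r1) by (apply (Rlt_le_trans _ (Rmin r r1)); [assumption|apply Rmin_r]).
    apply (ex_derive_n_ext_loc g). apply (filter_imp (Bl x0 r)). intros t Ht; symmetry; apply Heq; auto.
    apply Bl_open. unfold Bl. apply (Rlt_le_trans _ (Rmin r r1)); [assumption|apply Rmin_l].
    apply H; auto.
  - assert (Hy1 : Rabs (y - x0) < r1) by (apply (Rlt_le_trans _ (Rmin r r1)); [assumption|apply Rmin_r]).
    rewrite (Derive_n_ext_loc f g). apply H; auto.
    apply (filter_imp (Bl x0 r)). intros t Ht; apply Heq; auto.
    apply Bl_open. unfold Bl. apply (Rlt_le_trans _ (Rmin r r1)); [assumption|apply Rmin_l].
Qed.

Lemma DB_ext f g x0 : (forall y, f y = g y) -> DB g x0 -> DB f x0.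
Proof. intros H. apply (DB_ext_loc f g x0 1). lra. intros; auto. Qed.

Lemma DB_plus f g x0 : DB f x0 -> DB g x0 -> DB (fun t => f t + g t) x0.
Proof.
  intros [r1 [rho1 [M1 [Hr1 [Hrho1 [HM1 H1]]]]]] [r2 [rho2 [M2 [Hr2 [Hrho2 [HM2 H2]]]]]].
  exists (Rmin r1 r2), (Rmin rho1 rho2), (M1 + M2).
  assert (Hr : 0 < Rmin r1 r2) by (apply Rmin_pos; auto).
  assert (Hrho : 0 < Rmin rho1 rho2) by (apply Rmin_pos; auto).
  refine (conj Hr (conj Hrho (conj _ _))). lra.
  - intros n y Hy. assert (Hy1 : Rabs (y - x0) < r1) by (apply (Rlt_le_trans _ (Rmin r1 r2)); [assumption|apply Rmin_l]).
    assert (Hy2 : Rabs (y - x0) < r2) by (apply (Rlt_le_trans _ (Rmin r1 r2)); [assumption|apply Rmin_r]).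
    assert (L1 : locally y (fun t => forall k, (k <= n)%nat -> ex_derive_n f k t)).
    { apply (filter_imp (Bl x0 (Rmin r1 r2))). intros t Ht k _. apply H1. unfold Bl in Ht.
      apply (Rlt_le_trans _ (Rmin r1 r2)); [assumption|apply Rmin_l]. apply Bl_open. exact Hy. }
    assert (L2 : locally y (fun t => forall k, (k <= n)%nat -> ex_derive_n g k t)).
    { apply (filter_imp (Bl x0 (Rmin r1 r2))). intros t Ht k _. apply H2. unfold Bl in Ht.
      apply (Rlt_le_trans _ (Rmin r1 r2)); [assumption|apply Rmin_r]. apply Bl_open. exact Hy. }
    split. apply ex_derive_n_plus; auto.
    rewrite Derive_n_plus; auto. eapply Rle_trans. apply Rabs_triang.
    replace ((M1 + M2) * INR (fact n) / Rmin rho1 rho2 ^ n) with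
      (M1 * INR (fact n) / Rmin rho1 rho2 ^ n + M2 * INR (fact n) / Rmin rho1 rho2 ^ n) by (field; apply pow_nonzero; lra).
    apply Rplus_le_compat.
    + eapply Rle_trans. apply H1; auto. apply bnd_mono; try lra. apply Rmin_l.
    + eapply Rle_trans. apply H2; auto. apply bnd_mono; try lra. apply Rmin_r.
Qed.

Lemma DB_scal c f x0 : DB f x0 -> DB (fun t => c * f t) x0.
Proof.
  intros [r [rho [M [Hr [Hrho [HM H]]]]]].
  exists r, rho, ((Rabs c + 1) * M). pose proof (Rabs_pos c).
  repeat split; auto; try nra.
  - apply ex_derive_n_scal_l. apply H; auto.
  - rewrite Derive_n_scal_l, Rabs_mult. eapply Rle_trans.
    apply Rmult_le_compat_l. apply Rabs_pos. apply H; auto.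
    apply (Rle_trans _ ((Rabs c + 1) * (M * INR (fact n) / rho ^ n))).
    apply Rmult_le_compat_r. apply Rmult_le_pos. apply Rmult_le_pos. lra. apply Rlt_le, fact_pos.
    apply Rlt_le, Rinv_0_lt_compat, pow_lt; lra. lra.
    right. field. apply pow_nonzero; lra.
Qed.

Lemma DB_pow p x0 : DB (fun t => t ^ p) x0.
Proof.
  set (a := Rabs x0 + 1).
  exists 1, 1, (INR (fact p) * a ^ p). assert (Ha : 1 <= a) by (unfold a; pose proof (Rabs_pos x0); lra).
  assert (0 < a ^ p) by (apply pow_lt; lra). pose proof (fact_pos p).
  repeat split; try lra. nra. apply ex_derive_n_pow.
  rewrite Derive_n_pow. rewrite pow1, Rdiv_1_r.
  assert (Hy : Rabs y <= a).
  { unfold a. replace y with ((y - x0) + x0) by ring. eapply Rle_trans. apply Rabs_triang. lra. }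
  assert (1 <= INR (fact n)) by (apply (le_INR 1); apply Factorial.lt_O_fact).
  destruct (Compare_dec.le_dec n p).
  - rewrite Rabs_mult. assert (1 <= INR (fact (p - n))) by (apply (le_INR 1); apply Factorial.lt_O_fact).
    rewrite Rabs_right. 2:{ apply Rle_ge, Rlt_le, Rdiv_lt_0_compat; apply fact_pos. }
    rewrite <- RPow_abs. 
    assert (Rabs y ^ (p - n) <= a ^ p).
    { eapply Rle_trans. apply pow_incr. split. apply Rabs_pos. exact Hy. apply Rle_pow; auto. lia. }
    assert (INR (fact p) / INR (fact (p - n)) <= INR (fact p)).
    { unfold Rdiv. rewrite <- (Rmult_1_r (INR (fact p))) at 2. apply Rmult_le_compat_l. lra.
      rewrite <- Rinv_1. apply Rinv_le_contravar; lra. }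
    apply (Rle_trans _ (INR (fact p) * a ^ p)).
    apply Rmult_le_compat; auto. apply Rlt_le, Rdiv_lt_0_compat; apply fact_pos. apply pow_le, Rabs_pos.
    rewrite <- (Rmult_1_r (INR (fact p) * a ^ p)) at 1. apply Rmult_le_compat_l. apply Rmult_le_pos; lra. lra.
  - rewrite Rabs_R0. apply Rmult_le_pos. apply Rmult_le_pos; lra. lra.
Qed.

Lemma DB_const c x0 : DB (fun _ => c) x0.
Proof. apply (DB_ext _ (fun t => c * t ^ 0)). intros; simpl; ring. apply DB_scal, DB_pow. Qed.

Lemma DB_id x0 : DB (fun t => t) x0.
Proof. apply (DB_ext _ (fun t => t ^ 1)). intros; simpl; ring. apply DB_pow. Qed.

Lemma DB_mult f g x0 : DB f x0 -> DB g x0 -> DB (fun t => f t * g t) x0.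
Proof.
  intros Hf Hg.
  apply (DB_ext _ (fun t => /4 * (f t + g t) ^ 2 + (- / 4) * (f t + (-1) * g t) ^ 2)).
  intros; field.
  apply DB_plus; apply DB_scal.
  - apply (DB_comp (fun u => u ^ 2) (fun t => f t + g t)). apply DB_plus; auto. apply DB_pow.
  - apply (DB_comp (fun u => u ^ 2) (fun t => f t + -1 * g t)). apply DB_plus; auto. apply DB_scal; auto. apply DB_pow.
Qed.

Lemma sincos_dn n : forall a b, exists A B, Rabs A + Rabs B = Rabs a + Rabs b /\
  forall x, ex_derive_n (fun t => a * sin t + b * cos t) n x /\
   Derive_n (fun t => a * sin t + b * cos t) n x = A * sin x + B * cos x.
Proof.
  induction n as [|n IH]; intros a b.
  - exists a, b. split; auto. intros x; split; [exact I|reflexivity].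
  - destruct (IH (-b) a) as [A [B [HAB H]]]. exists A, B. split.
    + rewrite HAB, Rabs_Ropp. ring.
    + assert (HD : forall t, Derive (fun t => a * sin t + b * cos t) t = -b * sin t + a * cos t).
      { intros t. apply is_derive_unique. auto_derive; auto. ring. }
      intros x. split.
      * apply exDn_S_of. auto_derive; auto.
        eapply ex_derive_n_ext. 2: apply (proj1 (H x)). intros t. symmetry. apply HD.
      * rewrite Dn_S. rewrite <- (proj2 (H x)). apply Derive_n_ext. exact HD.
Qed.

Lemma DB_sincos a b x0 : DB (fun t => a * sin t + b * cos t) x0.
Proof.
  exists 1, 1, (Rabs a + Rabs b + 1). pose proof (Rabs_pos a). pose proof (Rabs_pos b).
  repeat split; try lra.
  - destruct (sincos_dn n a b) as [A [B [_ Hn]]]. apply Hn.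
  - destruct (sincos_dn n a b) as [A [B [HAB Hn]]]. rewrite (proj2 (Hn y)).
    rewrite pow1, Rdiv_1_r.
    assert (1 <= INR (fact n)) by (apply (le_INR 1); apply Factorial.lt_O_fact).
    eapply Rle_trans. apply Rabs_triang. rewrite !Rabs_mult.
    assert (Rabs (sin y) <= 1) by (apply Rabs_le; apply SIN_bound).
    assert (Rabs (cos y) <= 1) by (apply Rabs_le; apply COS_bound).
    pose proof (Rabs_pos A). pose proof (Rabs_pos B). pose proof (Rabs_pos (sin y)). pose proof (Rabs_pos (cos y)).
    apply (Rle_trans _ (Rabs A + Rabs B)). nra. nra.
Qed.

Lemma DB_sin x0 : DB sin x0.
Proof. apply (DB_ext _ (fun t => 1 * sin t + 0 * cos t)). intros; ring. apply DB_sincos. Qed.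
Lemma DB_cos x0 : DB cos x0.
Proof. apply (DB_ext _ (fun t => 0 * sin t + 1 * cos t)). intros; ring. apply DB_sincos. Qed.

Lemma exp_dn n : forall x, ex_derive_n exp n x /\ Derive_n exp n x = exp x.
Proof.
  induction n as [|n IH]; intros x. split; [exact I|reflexivity].
  assert (HD : forall t, Derive exp t = exp t) by (intros; apply is_derive_unique, is_derive_exp).
  split.
  - apply exDn_S_of. eexists; apply is_derive_exp.
    eapply ex_derive_n_ext. 2: apply (proj1 (IH x)). intros t. symmetry. apply HD.
  - rewrite Dn_S. rewrite (Derive_n_ext _ exp). apply IH. exact HD.
Qed.

Lemma DB_exp x0 : DB exp x0.
Proof.
  exists 1, 1, (exp (x0 + 1)). pose proof (exp_pos (x0+1)). repeat split; try lra.
  - apply exp_dn.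
  - rewrite (proj2 (exp_dn n y)). rewrite pow1, Rdiv_1_r.
    assert (1 <= INR (fact n)) by (apply (le_INR 1); apply Factorial.lt_O_fact).
    rewrite Rabs_right by (apply Rle_ge, Rlt_le, exp_pos).
    assert (exp y <= exp (x0 + 1)). { apply exp_le_3 || idtac. apply Rlt_le, exp_increasing. apply Rabs_def2 in H0. lra. }
    nra.
Qed.

Lemma DB_inv x0 : x0 <> 0 -> DB (fun t => / t) x0.
Proof.
  intros Hx. assert (Ha : 0 < Rabs x0) by (apply Rabs_pos_lt; auto).
  assert (Heq : forall t, / t = 1 / (0 - (-1) * t)). { intros t. unfold Rdiv. rewrite Rmult_1_l. f_equal. ring. }
  exists (Rabs x0 / 2), (Rabs x0 / 2), (2 / Rabs x0). split; [lra|]. split; [lra|]. split.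
  apply Rdiv_lt_0_compat; lra.
  intros n y Hyx.
  assert (Hy : Rabs x0 / 2 < Rabs y).
  { pose proof (Rabs_triang_inv x0 (x0 - y)). replace (x0 - (x0 - y)) with y in H by ring.
    rewrite <- Rabs_Ropp in Hyx. replace (- (y - x0)) with (x0 - y) in Hyx by ring. lra. }
  split.
  - eapply ex_derive_n_ext. intros t. symmetry. apply Heq. apply rat_dn.
    intro Hc. assert (y = 0) by lra. subst. rewrite Rabs_R0 in Hy. lra.
  - assert (Hy0 : 0 - -1 * y <> 0). { intro Hc. assert (y = 0) by lra. subst. rewrite Rabs_R0 in Hy. lra. }
    rewrite (Derive_n_ext (fun t => / t) (fun t => 1 / (0 - -1*t)) n y Heq). rewrite (proj2 (rat_dn 1 0 (-1) n y Hy0)).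
    replace (0 - -1 * y) with y by ring.
    assert (Hay : 0 < Rabs y) by lra.
    replace (Rabs (1 * INR (fact n) * (-1)^n / y^(S n))) with (INR (fact n) / Rabs y ^ (S n)).
    2:{ unfold Rdiv. rewrite !Rabs_mult, Rabs_R1, pow_1_abs, Rabs_inv, <- RPow_abs, (Rabs_right (INR (fact n))). ring. apply Rle_ge, Rlt_le, fact_pos. }
    replace (2 / Rabs x0 * INR (fact n) / (Rabs x0 / 2) ^ n) with (INR (fact n) / (Rabs x0 / 2) ^ (S n)).
    2:{ simpl. field. repeat split; try lra; apply pow_nonzero; lra. }
    unfold Rdiv. apply Rmult_le_compat_l. apply Rlt_le, fact_pos.
    apply Rinv_le_contravar. apply pow_lt; lra. apply pow_incr; lra.
Qed.

Lemma DB_antideriv f h x0 r0 : 0 < r0 ->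
  (forall y, Rabs (y - x0) < r0 -> is_derive f y (h y)) -> DB h x0 -> DB f x0.
Proof.
  intros Hr0 Hd [r [rho [M [Hr [Hrho [HM H]]]]]].
  set (r' := Rmin r0 r).
  assert (Hr' : 0 < r') by (apply Rmin_pos; auto).
  assert (Hin : forall y, Rabs (y - x0) < r' -> Rabs (y - x0) < r0 /\ Rabs (y - x0) < r).
  { intros y Hy. split; (apply (Rlt_le_trans _ r'); [exact Hy|]); [apply Rmin_l|apply Rmin_r]. }
  assert (HDf : forall y, Rabs (y - x0) < r' -> locally y (fun t => h t = Derive f t)).
  { intros y Hy. apply (filter_imp (Bl x0 r')). intros t Ht. symmetry. apply is_derive_unique, Hd, Hin, Ht.
    apply Bl_open. exact Hy. }
  set (M' := Rabs (f x0) + M * r' + M * rho + 1).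
  exists r', rho, M'. split; [auto|]. split; [auto|]. split.
  { unfold M'. pose proof (Rabs_pos (f x0)). nra. }
  intros n y Hy. destruct (Hin y Hy) as [Hy0 Hy1].
  destruct n as [|m].
  - split. exact I. simpl. rewrite Rdiv_1_r, Rmult_1_r.
    assert (Rabs (f y - f x0) <= M * Rabs (y - x0)).
    { apply (bounded_variation f h). intros t Ht. destruct (Hin t ltac:(lra)) as [Ht0 Ht1].
      split. apply Hd; auto. destruct (H 0%nat t Ht1) as [_ Hb]. simpl in Hb. lra. }
    pose proof (Rabs_triang_inv (f y) (f x0)). unfold M'. pose proof (Rabs_pos (y - x0)). nra.
  - split.
    + apply exDn_S_of. eexists; apply Hd; auto.
      apply (ex_derive_n_ext_loc h). apply HDf; auto. apply H; auto.
    + rewrite Dn_S. rewrite <- (Derive_n_ext_loc _ _ _ _ (HDf y Hy)).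
      eapply Rle_trans. apply H; auto.
      assert (rho ^ m <> 0) by (apply pow_nonzero; lra).
      assert (0 < rho ^ m) by (apply pow_lt; lra).
      pose proof (fact_pos m). assert (1 <= INR (S m)) by (apply (le_INR 1); lia).
      replace (M' * INR (fact (S m)) / rho ^ S m) with ((M' / rho) * INR (S m) * (INR (fact m) / rho ^ m)).
      2:{ rewrite fact_simpl, mult_INR, <- tech_pow_Rmult. field. split; lra. }
      replace (M * INR (fact m) / rho ^ m) with (M * (INR (fact m) / rho ^ m)) by (field; lra).
      apply Rmult_le_compat_r. apply Rlt_le, Rdiv_lt_0_compat; lra.
      assert (M <= M' / rho).
      { apply (Rmult_le_reg_r rho); auto. unfold Rdiv. rewrite Rmult_assoc, Rinv_l, Rmult_1_r by lra.
        unfold M'. pose proof (Rabs_pos (f x0)). nra. }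
      assert (0 <= M' / rho) by lra. nra.
Qed.

Lemma DB_ln x0 : 0 < x0 -> DB ln x0.
Proof.
  intros Hx. apply (DB_antideriv ln (fun t => / t) x0 (x0 / 2)). lra.
  intros y Hy. apply is_derive_ln. apply Rabs_def2 in Hy. lra.
  apply DB_inv. lra.
Qed.

Lemma DB_atan x0 : DB atan x0.
Proof.
  apply (DB_antideriv atan (fun t => / (1 + t ^ 2)) x0 1). lra.
  intros y _. apply is_derive_Reals. apply derivable_pt_lim_atan.
  apply (DB_comp (fun u => / u) (fun t => 1 + t ^ 2)).
  apply DB_plus. apply DB_const. apply DB_pow.
  apply DB_inv. pose proof (pow2_ge_0 x0). lra.
Qed.

Lemma DB_sqrt x0 : 0 < x0 -> DB sqrt x0.
Proof.
  intros Hx. apply (DB_ext_loc sqrt (fun t => exp (/ 2 * ln t)) x0 (x0 / 2)). lra.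
  intros y Hy. apply Rabs_def2 in Hy. rewrite <- Rpower_sqrt by lra. reflexivity.
  apply (DB_comp exp (fun t => / 2 * ln t)). apply DB_scal, DB_ln; auto. apply DB_exp.
Qed.

Lemma rem_bound h D M rho n : 0 < rho ->
  Rabs D <= M * INR (fact (S n)) / rho ^ S n ->
  Rabs (h ^ S n / INR (fact (S n)) * D) <= M * (Rabs h / rho) ^ S n.
Proof.
  intros Hr HD. pose proof (fact_pos (S n)).
  assert (0 < rho ^ S n) by (apply pow_lt; lra).
  rewrite Rabs_mult. unfold Rdiv. rewrite Rabs_mult, Rabs_inv, <- RPow_abs, (Rabs_right (INR _)) by lra.
  apply (Rle_trans _ (Rabs h ^ S n * / INR (fact (S n)) * (M * INR (fact (S n)) * / rho ^ S n))).
  apply Rmult_le_compat_l. apply Rmult_le_pos. apply pow_le, Rabs_pos. apply Rlt_le, Rinv_0_lt_compat; lra.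
  exact HD.
  right. rewrite Rpow_mult_distr, pow_inv. field. lra.
Qed.

Lemma sum_at0 (c : nat -> R) n : sum_f_R0 (fun m => c m * 0 ^ m) n = c 0%nat.
Proof. induction n. simpl. ring. rewrite tech5, IHn. simpl. ring. Qed.

Lemma taylor_bound f x0 r rho M y n : 0 < r -> 0 < rho -> 0 < M ->
  (forall n y, Rabs (y - x0) < r ->
      ex_derive_n f n y /\ Rabs (Derive_n f n y) <= M * INR (fact n) / rho ^ n) ->
  Rabs (y - x0) < r ->
  Rabs (sum_f_R0 (fun m => Derive_n f m x0 / INR (fact m) * (y - x0) ^ m) n - f y)
    <= M * (Rabs (y - x0) / rho) ^ S n.
Proof.
  intros Hr Hrho HM H Hy.
  destruct (total_order_T y x0) as [[Hlt|Heq]|Hgt].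
  - set (g := fun t => f (- t)).
    assert (Hex : forall t, Rabs (- t - x0) < r -> forall k, ex_derive_n g k t).
    { intros t Ht k. apply ex_derive_n_comp_opp.
      apply (filter_imp (Bl x0 r)). intros u Hu k' _. apply H, Hu. apply Bl_open. exact Ht. }
    assert (HD : forall t m, Rabs (- t - x0) < r -> Derive_n g m t = (-1) ^ m * Derive_n f m (- t)).
    { intros t m Ht. apply Derive_n_comp_opp.
      apply (filter_imp (Bl x0 r)). intros u Hu k' _. apply H, Hu. apply Bl_open. exact Ht. }
    assert (Hxy : - x0 < - y) by lra. destruct (Taylor_Lagrange g n (- x0) (- y) Hxy) as [z [Hz Heq]].
    { intros t Ht k _. apply Hex. rewrite Rabs_left in Hy by lra. rewrite Rabs_left1; lra. }
    change (g (- y)) with (f (- - y)) in Heq. replace (- - y) with y in Heq by ring. rewrite Heq.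
    rewrite (sum_eq (fun m => (- y - - x0) ^ m / INR (fact m) * Derive_n g m (- x0)) (fun m => Derive_n f m x0 / INR (fact m) * (y - x0) ^ m)).
    2:{ intros i _. rewrite HD. 2:{ rewrite Ropp_involutive, Rminus_diag, Rabs_R0; lra. }
        rewrite Ropp_involutive. replace ((- y - - x0) ^ i) with ((-1) ^ i * (y - x0) ^ i).
        2:{ rewrite <- Rpow_mult_distr. f_equal. ring. }
        assert (Hs : (-1)^i * (-1)^i = 1) by (rewrite <- Rpow_mult_distr; replace (-1 * -1) with 1 by ring; apply pow1).
        pose proof (INR_fact_neq_0 i).
        set (s := (-1)^i) in *. set (p := (y-x0)^i). set (F := INR (fact i)) in *.
        transitivity (s * s * (Derive_n f i x0 / F * p)). field. auto. rewrite Hs. ring. }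
    replace (sum_f_R0 (fun m => Derive_n f m x0 / INR (fact m) * (y - x0) ^ m) n -
      (sum_f_R0 (fun m => Derive_n f m x0 / INR (fact m) * (y - x0) ^ m) n +
       (- y - - x0) ^ S n / INR (fact (S n)) * Derive_n g (S n) z)) with
      (- ((- y - - x0) ^ S n / INR (fact (S n)) * Derive_n g (S n) z)) by ring.
    rewrite Rabs_Ropp. replace (Rabs (y - x0)) with (Rabs (- y - - x0)).
    2:{ rewrite <- Rabs_Ropp. f_equal. ring. }
    apply rem_bound; auto.
    assert (Hz' : Rabs (- z - x0) < r).
    { rewrite Rabs_left1 by lra. rewrite Rabs_left in Hy by lra. lra. }
    rewrite HD by auto. rewrite Rabs_mult, pow_1_abs, Rmult_1_l. apply H; auto.
  - subst y. rewrite Rminus_diag. rewrite sum_at0. rewrite Rabs_R0.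
    replace (Derive_n f 0 x0 / INR (fact 0) - f x0) with 0 by (simpl; field).
    rewrite Rdiv_0_l, pow_i by lia. rewrite Rabs_R0. lra.
  - destruct (Taylor_Lagrange f n x0 y Hgt) as [z [Hz Heq]].
    { intros t Ht k _. apply H. rewrite Rabs_right in Hy by lra. rewrite Rabs_right; lra. }
    rewrite Heq.
    rewrite (sum_eq (fun m => Derive_n f m x0 / INR (fact m) * (y - x0) ^ m) (fun m => (y - x0) ^ m / INR (fact m) * Derive_n f m x0)).
    2:{ intros i _. field. apply INR_fact_neq_0. }
    match goal with |- Rabs (?S - (?S + ?R)) <= _ => replace (S - (S + R)) with (- R) by ring end.
    rewrite Rabs_Ropp. apply rem_bound; auto. apply H.
    rewrite Rabs_right by lra. rewrite Rabs_right in Hy by lra. lra.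
Qed.

Lemma DB_pseries f x0 : DB f x0 -> exists (c : nat -> R) (r : R), 0 < r /\
  forall y, Rabs (y - x0) < r -> is_pseries c (y - x0) (f y).
Proof.
  intros [r [rho [M [Hr [Hrho [HM H]]]]]].
  exists (fun m => Derive_n f m x0 / INR (fact m)), (Rmin r (rho / 2)).
  split. apply Rmin_pos; lra.
  intros y Hy.
  assert (Hy1 : Rabs (y - x0) < r) by (apply (Rlt_le_trans _ (Rmin r (rho/2))); [exact Hy|apply Rmin_l]).
  assert (Hy2 : Rabs (y - x0) < rho / 2) by (apply (Rlt_le_trans _ (Rmin r (rho/2))); [exact Hy|apply Rmin_r]).
  set (q := Rabs (y - x0) / rho).
  assert (Hq : Rabs q < 1).
  { unfold q. rewrite Rabs_right. apply (Rmult_lt_reg_r rho); auto. unfold Rdiv.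
    rewrite Rmult_assoc, Rinv_l, Rmult_1_r by lra. lra.
    apply Rle_ge, Rmult_le_pos. apply Rabs_pos. apply Rlt_le, Rinv_0_lt_compat; lra. }
  assert (Hlim : is_lim_seq (fun n => q ^ S n) 0).
  { apply (is_lim_seq_incr_1 (fun n => q ^ n)). apply is_lim_seq_geom; auto. }
  assert (Hsum : forall n, sum_n (fun k => scal (pow_n (y - x0) k) (Derive_n f k x0 / INR (fact k))) n =
      sum_f_R0 (fun m => Derive_n f m x0 / INR (fact m) * (y - x0) ^ m) n).
  { intros n. rewrite sum_n_Reals. apply sum_eq. intros i _. rewrite pow_n_pow.
    change (scal ((y - x0) ^ i) (Derive_n f i x0 / INR (fact i))) with ((y - x0) ^ i * (Derive_n f i x0 / INR (fact i))). ring. }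
  unfold is_pseries. change (is_lim_seq (sum_n (fun k => scal (pow_n (y - x0) k) (Derive_n f k x0 / INR (fact k)))) (f y)).
  apply (is_lim_seq_le_le (fun n => f y - M * q ^ S n) _ (fun n => f y + M * q ^ S n)).
  - intros n. rewrite Hsum. pose proof (taylor_bound f x0 r rho M y n Hr Hrho HM H Hy1).
    fold q in H0. apply Rabs_le_between in H0. lra.
  - replace (Finite (f y)) with (Finite (f y - M * 0)) by (f_equal; ring).
    apply is_lim_seq_minus'. apply is_lim_seq_const. apply is_lim_seq_mult'. apply is_lim_seq_const. exact Hlim.
  - replace (Finite (f y)) with (Finite (f y + M * 0)) by (f_equal; ring).
    apply is_lim_seq_plus'. apply is_lim_seq_const. apply is_lim_seq_mult'. apply is_lim_seq_const. exact Hlim.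
Qed.

Lemma vnorm_sq t : vnorm t ^ 2 = dot t t.
Proof.
  unfold vnorm. rewrite pow2_sqrt. reflexivity. unfold dot.
  pose proof (pow2_ge_0 (vx t)). pose proof (pow2_ge_0 (vy t)). pose proof (pow2_ge_0 (vz t)). nra.
Qed.

Lemma triple_dot0 a b c : dot a a = 0 -> triple a b c = 0.
Proof.
  intros H. unfold dot in H.
  assert (vx a = 0) by nra. assert (vy a = 0) by nra. assert (vz a = 0) by nra.
  unfold triple, dot, cross, mkv; cbn [vx vy vz fst snd]. rewrite H0, H1, H2. ring.
Qed.

Lemma vnorm_nz a b c : triple a b c <> 0 -> vnorm a <> 0.
Proof.
  intros H Hn. apply H. apply triple_dot0. rewrite <- vnorm_sq, Hn. ring.
Qed.

Lemma rot0 t v : rot t 0 v = v.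
Proof.
  destruct v as [[a b] c]. unfold rot, vadd, vscal, mkv. rewrite cos_0, sin_0.
  cbn [vx vy vz fst snd]. apply (f_equal2 pair); [apply (f_equal2 pair)|]; unfold Rdiv; ring.
Qed.

Lemma cos2atan u : cos (2 * atan u) = (1 - u * u) / (1 + u * u).
Proof.
  rewrite cos_2a, cos_atan, sin_atan. unfold Rsqr.
  assert (Hp : 0 < 1 + u * u) by nra.
  assert (Hs : sqrt (1 + u * u) * sqrt (1 + u * u) = 1 + u * u) by (apply sqrt_sqrt; lra).
  assert (Hs0 : sqrt (1 + u * u) <> 0) by (apply Rgt_not_eq, sqrt_lt_R0; lra).
  set (s := sqrt (1 + u * u)) in *.
  replace (1 / s * (1 / s) - u / s * (u / s)) with ((1 - u * u) / (s * s)) by (field; auto).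
  rewrite Hs. reflexivity.
Qed.

Lemma sin2atan u : sin (2 * atan u) = 2 * u / (1 + u * u).
Proof.
  rewrite sin_2a, cos_atan, sin_atan. unfold Rsqr.
  assert (Hp : 0 < 1 + u * u) by nra.
  assert (Hs : sqrt (1 + u * u) * sqrt (1 + u * u) = 1 + u * u) by (apply sqrt_sqrt; lra).
  assert (Hs0 : sqrt (1 + u * u) <> 0) by (apply Rgt_not_eq, sqrt_lt_R0; lra).
  set (s := sqrt (1 + u * u)) in *.
  replace (2 * (u / s) * (1 / s)) with (2 * u / (s * s)) by (field; auto).
  rewrite Hs. reflexivity.
Qed.

Section Geo.
Variables t1 t2 t3 t4 : vec3.

Definition n1 := vnorm t1.
Definition n4 := vnorm t4.
Definition P2 := vscal (dot t1 t2 / n1 ^ 2) t1.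
Definition Q2 := vadd t2 (vscal (-1) P2).
Definition S2 := vscal (/ n1) (cross t1 t2).
Definition P3 := vscal (dot t4 t3 / n4 ^ 2) t4.
Definition Q3 := vadd t3 (vscal (-1) P3).
Definition S3 := vscal (/ n4) (cross t4 t3).

Definition Af th := dot P2 (t3d t3 t4 th) - dot t2 t3.
Definition Bf th := dot Q2 (t3d t3 t4 th).
Definition Cf th := dot S2 (t3d t3 t4 th).

Ltac unf := unfold f_comp, Af, Bf, Cf, Q2, S2, P2, Q3, S3, P3, t2d, t3d, rot, n1, n4,
  triple, dot, cross, vadd, vscal, mkv, Rdiv; cbn [vx vy vz fst snd].

Lemma f_dec y th : f_comp t1 t2 t3 t4 y th = Af th + Bf th * cos y + Cf th * sin y.
Proof. unf. ring. Qed.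

Lemma trig_form V th : dot V (t3d t3 t4 th) = dot V P3 + dot V Q3 * cos th + dot V S3 * sin th.
Proof. unf. ring. Qed.

Lemma t3d0 : t3d t3 t4 0 = t3.
Proof. apply rot0. Qed.
Lemma t2d0 : t2d t1 t2 0 = t2.
Proof. apply rot0. Qed.

Lemma ABC0 : Af 0 + Bf 0 = 0.
Proof. unfold Af, Bf. rewrite t3d0. unf. ring. Qed.

Lemma C0 : Cf 0 = triple t1 t2 t3 / n1.
Proof. unfold Cf. rewrite t3d0. unf. ring. Qed.

Definition Dy y th := - Bf th * sin y + Cf th * cos y.
Definition dt3 th := vadd (vscal (- sin th) Q3) (vscal (cos th) S3).
Definition Dth y th := dot (t2d t1 t2 y) (dt3 th).

Hypothesis Hn1 : n1 <> 0.
Hypothesis Hn4 : n4 <> 0.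

Lemma I1 y th : Dy y th = triple t1 (t2d t1 t2 y) (t3d t3 t4 th) / n1.
Proof.
  transitivity (triple t1 (t2d t1 t2 y) (t3d t3 t4 th) / n1 + sin y * dot t2 (t3d t3 t4 th) * (dot t1 t1 - n1^2) / n1^2).
  - unfold n1 in Hn1. unfold n4 in Hn4. unfold Dy. unf. field. split; assumption.
  - replace (dot t1 t1 - n1^2) with 0 by (unfold n1; rewrite vnorm_sq; ring). unfold Rdiv; ring.
Qed.

Lemma I2 y th : Dth y th = - triple (t2d t1 t2 y) (t3d t3 t4 th) t4 / n4.
Proof.
  transitivity (- triple (t2d t1 t2 y) (t3d t3 t4 th) t4 / n4 + sin th * dot (t2d t1 t2 y) t3 * (dot t4 t4 - n4^2) / n4^2).
  - unfold n1 in Hn1. unfold n4 in Hn4. unfold Dth, dt3. unf. field. try split; assumption.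
  - replace (dot t4 t4 - n4^2) with 0 by (unfold n4; rewrite vnorm_sq; ring). unfold Rdiv; ring.
Qed.

Definition cA th := Af th + Bf th.
Definition aA th := Af th - Bf th.
Definition Dl th := Cf th * Cf th - aA th * cA th.
Definition sg := if Rlt_dec 0 (Cf 0) then 1 else -1.
Definition dd th := Cf th + sg * sqrt (Dl th).
Definition uu th := - cA th * / dd th.
Definition gam th := 2 * atan (uu th).

Lemma sg_sq : sg * sg = 1.
Proof. unfold sg. destruct (Rlt_dec 0 (Cf 0)); ring. Qed.

Lemma f_gam th : 0 <= Dl th -> dd th <> 0 -> f_comp t1 t2 t3 t4 (gam th) th = 0.
Proof.
  intros HD Hd. rewrite f_dec. unfold gam. rewrite cos2atan, sin2atan.
  assert (Hnum : cA th + 2 * Cf th * uu th + aA th * uu th * uu th = 0).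
  { assert (Hr : sqrt (Dl th) * sqrt (Dl th) = Dl th) by (apply sqrt_sqrt; auto).
    pose proof sg_sq as Hsg.
    unfold uu.
    replace (cA th + 2 * Cf th * (- cA th * / dd th) + aA th * (- cA th * / dd th) * (- cA th * / dd th))
      with (cA th * (dd th * dd th - 2 * Cf th * dd th + aA th * cA th) / (dd th * dd th)) by (field; auto).
    replace (dd th * dd th - 2 * Cf th * dd th + aA th * cA th) with
      (sg * sg * (sqrt (Dl th) * sqrt (Dl th)) - Cf th * Cf th + aA th * cA th) by (unfold dd; ring).
    rewrite Hr, Hsg. unfold Dl. unfold Rdiv. ring. }
  assert (Hp : 0 < 1 + uu th * uu th) by nra.
  replace (Af th + Bf th * ((1 - uu th * uu th) / (1 + uu th * uu th)) + Cf th * (2 * uu th / (1 + uu th * uu th)))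
    with ((cA th + 2 * Cf th * uu th + aA th * uu th * uu th) / (1 + uu th * uu th)) by (unfold cA, aA; field; lra).
  rewrite Hnum. unfold Rdiv. ring.
Qed.
End Geo.

Lemma DB_trig k0 k1 k2 x0 : DB (fun t => k0 + k1 * cos t + k2 * sin t) x0.
Proof. apply DB_plus. apply DB_plus. apply DB_const. apply DB_scal, DB_cos. apply DB_scal, DB_sin. Qed.

Lemma DB_ex_derive f x : DB f x -> ex_derive f x.
Proof.
  intros [r [rho [M [Hr [_ [_ H]]]]]]. destruct (H 1%nat x) as [H1 _].
  rewrite Rminus_diag, Rabs_R0; auto. exact H1.
Qed.

Lemma DB_ex_derive2 f x : DB f x -> ex_derive (Derive f) x.
Proof.
  intros [r [rho [M [Hr [_ [_ H]]]]]]. destruct (H 2%nat x) as [H1 _].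
  rewrite Rminus_diag, Rabs_R0; auto. exact H1.
Qed.

Lemma DB_cont f x : DB f x -> continuous f x.
Proof. intros H. apply (ex_derive_continuous f x). apply DB_ex_derive, H. Qed.

Section G.
Variables t1 t2 t3 t4 : vec3.

Lemma DB_Af x0 : DB (Af t1 t2 t3 t4) x0.
Proof.
  apply (DB_ext _ (fun t => (dot (P2 t1 t2) (P3 t3 t4) - dot t2 t3) + dot (P2 t1 t2) (Q3 t3 t4) * cos t + dot (P2 t1 t2) (S3 t3 t4) * sin t)).
  intros y. unfold Af. rewrite trig_form. ring. apply DB_trig.
Qed.
Lemma DB_Bf x0 : DB (Bf t1 t2 t3 t4) x0.
Proof.
  apply (DB_ext _ (fun t => dot (Q2 t1 t2) (P3 t3 t4) + dot (Q2 t1 t2) (Q3 t3 t4) * cos t + dot (Q2 t1 t2) (S3 t3 t4) * sin t)).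
  intros y. unfold Bf. rewrite trig_form. ring. apply DB_trig.
Qed.
Lemma DB_Cf x0 : DB (Cf t1 t2 t3 t4) x0.
Proof.
  apply (DB_ext _ (fun t => dot (S2 t1 t2) (P3 t3 t4) + dot (S2 t1 t2) (Q3 t3 t4) * cos t + dot (S2 t1 t2) (S3 t3 t4) * sin t)).
  intros y. unfold Cf. rewrite trig_form. ring. apply DB_trig.
Qed.

Lemma DB_cA x0 : DB (cA t1 t2 t3 t4) x0.
Proof. apply DB_plus; [apply DB_Af|apply DB_Bf]. Qed.

Lemma DB_Dl x0 : DB (Dl t1 t2 t3 t4) x0.
Proof.
  apply (DB_ext _ (fun t => Cf t1 t2 t3 t4 t * Cf t1 t2 t3 t4 t + (-1) * ((Af t1 t2 t3 t4 t + (-1) * Bf t1 t2 t3 t4 t) * cA t1 t2 t3 t4 t))).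
  intros y. unfold Dl, aA. ring.
  apply DB_plus. apply DB_mult; apply DB_Cf. apply DB_scal. apply DB_mult. apply DB_plus. apply DB_Af. apply DB_scal, DB_Bf.
  apply DB_cA.
Qed.

Lemma DB_dd x0 : 0 < Dl t1 t2 t3 t4 x0 -> DB (dd t1 t2 t3 t4) x0.
Proof.
  intros H. apply DB_plus. apply DB_Cf. apply DB_scal.
  apply (DB_comp sqrt (Dl t1 t2 t3 t4)). apply DB_Dl. apply DB_sqrt; auto.
Qed.

Lemma DB_gam x0 : 0 < Dl t1 t2 t3 t4 x0 -> dd t1 t2 t3 t4 x0 <> 0 -> DB (gam t1 t2 t3 t4) x0.
Proof.
  intros H1 H2. apply DB_scal. apply (DB_comp atan (uu t1 t2 t3 t4)).
  - apply (DB_ext _ (fun t => (-1 * cA t1 t2 t3 t4 t) * (/ dd t1 t2 t3 t4 t))).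
    intros y. unfold uu. ring.
    apply DB_mult. apply DB_scal, DB_cA. apply (DB_comp (fun u => / u) (dd t1 t2 t3 t4)).
    apply DB_dd; auto. apply DB_inv; auto.
  - apply DB_atan.
Qed.
End G.

Lemma loc_cont (f : R -> R) (x e : R) : continuous f x -> 0 < e -> locally x (fun t : R => Rabs (f t - f x) < e).
Proof.
  intros H He. apply (H (fun v => Rabs (v - f x) < e)). exists (mkposreal e He). intros y Hy. exact Hy.
Qed.

Lemma loc_eps (P : R -> Prop) : @locally R_UniformSpace 0 P -> exists e, 0 < e /\ forall t, Rabs t < e -> P t.
Proof.
  intros [e He]. exists e. split. apply cond_pos. intros t Ht. apply He.
  unfold ball; simpl. unfold AbsRing_ball, abs, minus, plus, opp; simpl. rewrite Ropp_0, Rplus_0_r. exact Ht.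
Qed.

Lemma sin_le c : Rabs (sin c) <= Rabs c.
Proof.
  replace (sin c) with (sin c - sin 0) by (rewrite sin_0; ring). replace (Rabs c) with (1 * Rabs (c - 0)) by (rewrite Rminus_0_r; ring).
  apply (bounded_variation sin cos). intros t _. split. apply is_derive_Reals, derivable_pt_lim_sin.
  apply Rabs_le, COS_bound.
Qed.

Lemma cos_le c : Rabs (cos c - 1) <= Rabs c.
Proof.
  replace (cos c - 1) with (cos c - cos 0) by (rewrite cos_0; ring). replace (Rabs c) with (1 * Rabs (c - 0)) by (rewrite Rminus_0_r; ring).
  apply (bounded_variation cos (fun t => - sin t)). intros t _. split. apply is_derive_Reals, derivable_pt_lim_cos.
  rewrite Rabs_Ropp. apply Rabs_le, SIN_bound.
Qed.

Lemma trig_bound k0 k1 k2 t : Rabs (k0 + k1 * cos t + k2 * sin t) <= Rabs k0 + Rabs k1 + Rabs k2.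
Proof.
  assert (Rabs (cos t) <= 1) by (apply Rabs_le, COS_bound).
  assert (Rabs (sin t) <= 1) by (apply Rabs_le, SIN_bound).
  eapply Rle_trans. apply Rabs_triang. eapply Rle_trans. apply Rplus_le_compat_r. apply Rabs_triang.
  rewrite !Rabs_mult. pose proof (Rabs_pos k1). pose proof (Rabs_pos k2).
  pose proof (Rabs_pos (cos t)). pose proof (Rabs_pos (sin t)). nra.
Qed.

Section Main.
Variables t1 t2 t3 t4 : vec3.

Lemma deriv_h (g : R -> R) th : vnorm t1 <> 0 -> vnorm t4 <> 0 -> ex_derive g th ->
  is_derive (fun t => f_comp t1 t2 t3 t4 (g t) t) th
    (Dy t1 t2 t3 t4 (g th) th * Derive g th + Dth t1 t2 t3 t4 (g th) th).
Proof.
  intros N1 N4 Hg. unfold Dy, Dth, dt3.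
  unfold f_comp, Af, Bf, Cf, Q2, S2, P2, Q3, S3, P3, t2d, t3d, rot, n1, n4,
  triple, dot, cross, vadd, vscal, mkv, Rdiv; cbn [vx vy vz fst snd].
  auto_derive. repeat split; auto.
  change (Derive (fun x => g x) th) with (Derive g th). field. split; auto.
Qed.

Lemma mv1_ex (g : R -> R) th : ex_derive g th -> ex_derive (fun t => f_mv1 t1 t2 t3 t4 (g t) t) th.
Proof.
  intros Hg. unfold f_mv1, t2d, t3d, rot, triple, dot, cross, vadd, vscal, mkv, Rdiv; cbn [vx vy vz fst snd].
  auto_derive. repeat split; auto.
Qed.
Lemma mv2_ex (g : R -> R) th : ex_derive g th -> ex_derive (fun t => f_mv2 t1 t2 t3 t4 (g t) t) th.
Proof.
  intros Hg. unfold f_mv2, t2d, t3d, rot, triple, dot, cross, vadd, vscal, mkv, Rdiv; cbn [vx vy vz fst snd].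
  auto_derive. repeat split; auto.
Qed.
Lemma mv3_ex (g : R -> R) th : ex_derive g th -> ex_derive (fun t => f_mv3 t1 t3 t4 (g t) t) th.
Proof.
  intros Hg. unfold f_mv3, t2d, t3d, rot, triple, dot, cross, vadd, vscal, mkv, Rdiv; cbn [vx vy vz fst snd].
  auto_derive. repeat split; auto.
Qed.
Lemma mv4_ex (g : R -> R) th : ex_derive g th -> ex_derive (fun t => f_mv4 t1 t2 t4 (g t) t) th.
Proof.
  intros Hg. unfold f_mv4, t2d, t3d, rot, triple, dot, cross, vadd, vscal, mkv, Rdiv; cbn [vx vy vz fst snd].
  auto_derive. repeat split; auto.
Qed.
End Main.

Lemma cont_loc_pos (f : R -> R) x : continuous f x -> 0 < f x -> locally x (fun t => 0 < f t).
Proof.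
  intros H Hp. apply (filter_imp (fun t => Rabs (f t - f x) < f x)).
  intros t Ht. apply Rabs_def2 in Ht. lra. apply loc_cont; auto.
Qed.

Lemma cont_loc_nz (f : R -> R) x : continuous f x -> f x <> 0 -> locally x (fun t => f t <> 0).
Proof.
  intros H Hp. apply (filter_imp (fun t => Rabs (f t - f x) < Rabs (f x))).
  intros t Ht Hc. rewrite Hc in Ht. rewrite Rminus_0_l, Rabs_Ropp in Ht. lra.
  apply loc_cont; auto. apply Rabs_pos_lt; auto.
Qed.

Lemma ex_cont_pt (f : R -> R) x : ex_derive f x -> continuity_pt f x.
Proof. intros H. apply continuity_pt_filterlim. apply (ex_derive_continuous f x H). Qed.

Section Main2.
Variables t1 t2 t3 t4 : vec3.
Hypothesis H1 : triple t1 t2 t3 <> 0.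
Hypothesis H2 : triple t2 t3 t4 <> 0.
Hypothesis H3 : triple t3 t4 t1 <> 0.
Hypothesis H4 : triple t4 t1 t2 <> 0.

Local Notation gm := (gam t1 t2 t3 t4).
Local Notation Cf' := (Cf t1 t2 t3 t4).
Local Notation Bf' := (Bf t1 t2 t3 t4).
Local Notation Af' := (Af t1 t2 t3 t4).
Local Notation fc := (f_comp t1 t2 t3 t4).

Lemma N1 : vnorm t1 <> 0.
Proof. exact (vnorm_nz t1 t2 t3 H1). Qed.
Lemma N4 : vnorm t4 <> 0.
Proof. exact (vnorm_nz t4 t1 t2 H4). Qed.

Lemma C0nz : Cf' 0 <> 0.
Proof. rewrite C0. unfold n1. intro Hc. apply H1. pose proof N1. 
  apply (Rmult_eq_compat_r (vnorm t1)) in Hc. unfold Rdiv in Hc. rewrite Rmult_assoc, Rinv_l, Rmult_1_r, Rmult_0_l in Hc; auto. Qed.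

Lemma cA0 : cA t1 t2 t3 t4 0 = 0.
Proof. apply ABC0. Qed.

Lemma Dl0 : Dl t1 t2 t3 t4 0 = Cf' 0 * Cf' 0.
Proof. unfold Dl. rewrite cA0. ring. Qed.

Lemma Dl0pos : 0 < Dl t1 t2 t3 t4 0.
Proof. rewrite Dl0. pose proof C0nz. apply Rsqr_pos_lt in H. exact H. Qed.

Lemma dd0 : dd t1 t2 t3 t4 0 = 2 * Cf' 0.
Proof.
  unfold dd. rewrite Dl0. replace (Cf' 0 * Cf' 0) with (Rsqr (Cf' 0)) by reflexivity.
  rewrite sqrt_Rsqr_abs. unfold sg. pose proof C0nz.
  destruct (Rlt_dec 0 (Cf' 0)).
  - rewrite Rabs_right by lra. ring.
  - rewrite Rabs_left by lra. ring.
Qed.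

Lemma dd0nz : dd t1 t2 t3 t4 0 <> 0.
Proof. rewrite dd0. pose proof C0nz. lra. Qed.

Lemma gam0 : gm 0 = 0.
Proof. unfold gam, uu. rewrite cA0. rewrite Ropp_0, Rmult_0_l, atan_0. ring. Qed.

Definition Kb := Rabs (dot (Q2 t1 t2) (P3 t3 t4)) + Rabs (dot (Q2 t1 t2) (Q3 t3 t4)) + Rabs (dot (Q2 t1 t2) (S3 t3 t4))
  + Rabs (dot (S2 t1 t2) (P3 t3 t4)) + Rabs (dot (S2 t1 t2) (Q3 t3 t4)) + Rabs (dot (S2 t1 t2) (S3 t3 t4)).

Lemma Kb_pos : 0 <= Kb.
Proof. unfold Kb. repeat (apply Rplus_le_le_0_compat || apply Rabs_pos). Qed.

Lemma Bbound t : Rabs (Bf' t) <= Kb.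
Proof.
  unfold Bf. rewrite trig_form. eapply Rle_trans. apply trig_bound. unfold Kb.
  pose proof (Rabs_pos (dot (S2 t1 t2) (P3 t3 t4))). pose proof (Rabs_pos (dot (S2 t1 t2) (Q3 t3 t4))).
  pose proof (Rabs_pos (dot (S2 t1 t2) (S3 t3 t4))). lra.
Qed.

Lemma Cbound t : Rabs (Cf' t) <= Kb.
Proof.
  unfold Cf. rewrite trig_form. eapply Rle_trans. apply trig_bound. unfold Kb.
  pose proof (Rabs_pos (dot (Q2 t1 t2) (P3 t3 t4))). pose proof (Rabs_pos (dot (Q2 t1 t2) (Q3 t3 t4))).
  pose proof (Rabs_pos (dot (Q2 t1 t2) (S3 t3 t4))). lra.
Qed.

Definition eta := Rmin 1 (Rabs (Cf' 0) / (4 * (Kb + 1))).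

Lemma eta_pos : 0 < eta.
Proof. unfold eta. pose proof Kb_pos. pose proof (Rabs_pos_lt _ C0nz). apply Rmin_pos. lra. apply Rdiv_lt_0_compat; lra. Qed.

Lemma box t c : Rabs (Cf' t - Cf' 0) < Rabs (Cf' 0) / 2 -> Rabs c < eta -> Dy t1 t2 t3 t4 c t <> 0.
Proof.
  intros Ht Hc. pose proof Kb_pos as HK. pose proof (Rabs_pos_lt _ C0nz) as HC.
  assert (He1 : eta <= Rabs (Cf' 0) / (4 * (Kb + 1))) by apply Rmin_r.
  assert (HKe : Kb * eta <= Rabs (Cf' 0) / 4).
  { apply (Rle_trans _ (Kb * (Rabs (Cf' 0) / (4 * (Kb + 1))))). apply Rmult_le_compat_l; auto.
    apply (Rmult_le_reg_r (4 * (Kb + 1))). lra.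
    replace (Kb * (Rabs (Cf' 0) / (4 * (Kb + 1))) * (4 * (Kb + 1))) with (Kb * Rabs (Cf' 0)) by (field; lra).
    replace (Rabs (Cf' 0) / 4 * (4 * (Kb + 1))) with (Kb * Rabs (Cf' 0) + Rabs (Cf' 0)) by field. lra. }
  assert (T1 : Rabs (Cf' t * (cos c - 1)) <= Kb * eta).
  { rewrite Rabs_mult. apply Rmult_le_compat; try apply Rabs_pos. apply Cbound. pose proof (cos_le c). lra. }
  assert (T2 : Rabs (Bf' t * sin c) <= Kb * eta).
  { rewrite Rabs_mult. apply Rmult_le_compat; try apply Rabs_pos. apply Bbound. pose proof (sin_le c). lra. }
  unfold Dy. intro Hd.
  assert (Heq : Cf' 0 = - ((Cf' t - Cf' 0) + Cf' t * (cos c - 1) - Bf' t * sin c)) by (rewrite <- (Rplus_0_r (- _)) at 1; rewrite <- Hd; ring).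
  assert (Rabs (Cf' 0) <= Rabs (Cf' t - Cf' 0) + Rabs (Cf' t * (cos c - 1)) + Rabs (Bf' t * sin c)).
  { rewrite Heq at 1. rewrite Rabs_Ropp. unfold Rminus at 2. eapply Rle_trans. apply Rabs_triang.
    rewrite Rabs_Ropp. apply Rplus_le_compat_r. apply Rabs_triang. }
  lra.
Qed.

Lemma mono t y1 y2 : Rabs (Cf' t - Cf' 0) < Rabs (Cf' 0) / 2 -> Rabs y1 < eta -> Rabs y2 < eta ->
  fc y1 t = 0 -> fc y2 t = 0 -> y1 = y2.
Proof.
  intros Ht Hy1 Hy2 F1 F2.
  destruct (MVT_gen (fun y => Af' t + Bf' t * cos y + Cf' t * sin y) y1 y2 (fun y => Dy t1 t2 t3 t4 y t)) as [c [Hc Heq]].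
  - intros x _. unfold Dy. auto_derive; auto. ring.
  - intros x _. apply ex_cont_pt. auto_derive; auto.
  - rewrite f_dec in F1, F2. cbv beta in Heq. rewrite F1, F2 in Heq.
    assert (Hc' : Rabs c < eta).
    { apply Rabs_def2 in Hy1. apply Rabs_def2 in Hy2. apply Rabs_def1.
      eapply Rle_lt_trans. apply Hc. apply Rmax_lub_lt; lra.
      eapply Rlt_le_trans. 2: apply Hc. apply Rmin_glb_lt; lra. }
    pose proof (box t c Ht Hc'). 
    assert (Dy t1 t2 t3 t4 c t * (y2 - y1) = 0) by lra.
    apply Rmult_integral in H0. destruct H0. contradiction. lra.
Qed.

End Main2.

Theorem lemmaA1 (t1 t2 t3 t4 : vec3) :
  triple t1 t2 t3 <> 0 -> triple t2 t3 t4 <> 0 ->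
  triple t3 t4 t1 <> 0 -> triple t4 t1 t2 <> 0 ->
  exists (thm thp : R), thm < 0 < thp /\
  exists gamma : R -> R,
    C1_on gamma thm thp /\ gamma 0 = 0 /\
    (forall th, thm < th < thp ->
       f_comp t1 t2 t3 t4 (gamma th) th = 0 /\
       f_mv_pos t1 t2 t3 t4 (gamma th) th) /\
    (forall g : R -> R,
       C1_on g thm thp -> g 0 = 0 ->
       (forall th, thm < th < thp ->
          f_comp t1 t2 t3 t4 (g th) th = 0 /\
          f_mv_pos t1 t2 t3 t4 (g th) th) ->
       forall th, thm < th < thp -> g th = gamma th) /\
    analytic_on gamma thm thp /\
    (forall th, thm < th < thp ->
       is_derive gamma th
         (vnorm t1 / vnorm t4 *
          (triple (t2d t1 t2 (gamma th)) (t3d t3 t4 th) t4 /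
           triple t1 (t2d t1 t2 (gamma th)) (t3d t3 t4 th)))).
Proof.
  intros H1 H2 H3 H4.
  pose proof (N1 t1 t2 t3 H1) as HN1. pose proof (N4 t1 t2 t4 H4) as HN4.
  pose proof (Dl0pos t1 t2 t3 t4 H1) as HDl0. pose proof (dd0nz t1 t2 t3 t4 H1) as Hdd0.
  pose proof (gam0 t1 t2 t3 t4) as Hg00. pose proof (C0nz t1 t2 t3 t4 H1) as HC0.
  pose proof (eta_pos t1 t2 t3 t4 H1) as Heta.
  set (gm := gam t1 t2 t3 t4) in *.
  set (et := eta t1 t2 t3 t4) in *.
  assert (DB0 : DB gm 0) by (apply DB_gam; auto).
  assert (Hex0 : ex_derive gm 0) by (apply DB_ex_derive; auto).
  assert (V1 : 0 < f_mv1 t1 t2 t3 t4 (gm 0) 0).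
  { unfold f_mv1. rewrite Hg00, t2d0, t3d0. apply Rsqr_pos_lt in H1. exact H1. }
  assert (V2 : 0 < f_mv2 t1 t2 t3 t4 (gm 0) 0).
  { unfold f_mv2. rewrite Hg00, t2d0, t3d0. apply Rsqr_pos_lt in H2. exact H2. }
  assert (V3 : 0 < f_mv3 t1 t3 t4 (gm 0) 0).
  { unfold f_mv3. rewrite t3d0. apply Rsqr_pos_lt in H3. exact H3. }
  assert (V4 : 0 < f_mv4 t1 t2 t4 (gm 0) 0).
  { unfold f_mv4. rewrite Hg00, t2d0. apply Rsqr_pos_lt in H4. exact H4. }
  assert (HC0p : 0 < Rabs (Cf t1 t2 t3 t4 0) / 2) by (pose proof (Rabs_pos_lt _ HC0); lra).
  assert (Hloc : locally 0 (fun t =>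
     (0 < Dl t1 t2 t3 t4 t /\ dd t1 t2 t3 t4 t <> 0) /\
     (0 < f_mv1 t1 t2 t3 t4 (gm t) t /\ 0 < f_mv2 t1 t2 t3 t4 (gm t) t /\
      0 < f_mv3 t1 t3 t4 (gm t) t /\ 0 < f_mv4 t1 t2 t4 (gm t) t) /\
     (Rabs (gm t - gm 0) < et / 2 /\ Rabs (Cf t1 t2 t3 t4 t - Cf t1 t2 t3 t4 0) < Rabs (Cf t1 t2 t3 t4 0) / 2))).
  { repeat apply filter_and.
    - apply cont_loc_pos; auto. apply DB_cont, DB_Dl.
    - apply cont_loc_nz; auto. apply DB_cont, DB_dd; auto.
    - apply cont_loc_pos; auto. apply (ex_derive_continuous (fun t => f_mv1 t1 t2 t3 t4 (gm t) t)). apply mv1_ex; auto.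
    - apply cont_loc_pos; auto. apply (ex_derive_continuous (fun t => f_mv2 t1 t2 t3 t4 (gm t) t)). apply mv2_ex; auto.
    - apply cont_loc_pos; auto. apply (ex_derive_continuous (fun t => f_mv3 t1 t3 t4 (gm t) t)). apply mv3_ex; auto.
    - apply cont_loc_pos; auto. apply (ex_derive_continuous (fun t => f_mv4 t1 t2 t4 (gm t) t)). apply mv4_ex; auto.
    - apply loc_cont. apply DB_cont; auto. lra.
    - apply loc_cont. apply DB_cont, DB_Cf. auto. }
  destruct (loc_eps _ Hloc) as [eps [Heps Hall]].
  assert (Hin : forall th, - eps < th < eps -> Rabs th < eps).
  { intros th Hth. apply Rabs_def1; lra. }
  assert (DBth : forall th, - eps < th < eps -> DB gm th).
  { intros th Hth. destruct (Hall th (Hin th Hth)) as [[Ha Hb] _]. apply DB_gam; auto. }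
  assert (Hsol : forall th, - eps < th < eps -> f_comp t1 t2 t3 t4 (gm th) th = 0).
  { intros th Hth. destruct (Hall th (Hin th Hth)) as [[Ha Hb] _]. apply f_gam; auto. lra. }
  exists (- eps), eps. split. lra.
  exists gm. split; [|split; [|split; [|split; [|split]]]].
  -
    intros x Hx. split. apply DB_ex_derive; auto.
    apply (ex_derive_continuous (Derive gm)). apply DB_ex_derive2; auto.
  - exact Hg00.
  - intros th Hth. split. apply Hsol; auto.
    destruct (Hall th (Hin th Hth)) as [_ [[M1 [M2 [M3 M4]]] _]].
    unfold f_mv_pos. repeat split; assumption.
  -
    intros g Hg Hg0 Hgs.
    assert (Small : forall s, - eps < s < eps -> Rabs (g s) < et -> g s = gm s).
    { intros s Hs Hgs'. destruct (Hall s (Hin s Hs)) as [_ [_ [Hgm HCs]]].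
      rewrite Hg00, Rminus_0_r in Hgm.
      apply (mono t1 t2 t3 t4 H1 s); auto; try (fold et; lra); try (apply Hgs; auto); try (apply Hsol; auto). }
    intros th Hth. apply Small; auto.
    destruct (Rlt_le_dec (Rabs (g th)) et) as [Hlt|Hge]; auto. exfalso.
    set (k := 3 * et / 4).
    assert (Hcont : forall a, - eps < a < eps -> continuity_pt (fun t => g t * g t - k * k) a).
    { intros a Ha. apply ex_cont_pt. destruct (Hg a Ha) as [Hga _]. auto_derive; auto. }
    assert (Hcont' : forall a, - eps < a < eps -> continuity_pt (fun t => - (g t * g t - k * k)) a).
    { intros a Ha. apply ex_cont_pt. destruct (Hg a Ha) as [Hga _]. auto_derive; auto. }
    assert (Hgth : k * k < g th * g th).
    { assert (Habs : Rabs (g th) * Rabs (g th) = g th * g th).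
      { rewrite <- Rabs_mult. apply Rabs_right. apply Rle_ge. apply (Rle_0_sqr (g th)). }
      assert (et * et <= Rabs (g th) * Rabs (g th)) by (apply Rmult_le_compat; lra).
      assert (k * k < et * et) by (unfold k; apply Rmult_le_0_lt_compat; lra).
      lra. }
    assert (Hz : exists z, - eps < z < eps /\ g z * g z = k * k).
    { assert (Hk : 0 < k) by (unfold k; lra).
      destruct (Rtotal_order th 0) as [Hn|[He|Hp]].
      - assert (A1 : forall a, th <= a <= 0 -> continuity_pt (fun t => - (g t * g t - k * k)) a) by (intros; apply Hcont'; lra).
        assert (A2 : - (g th * g th - k * k) < 0) by lra.
        assert (A3 : 0 < - (g 0 * g 0 - k * k)) by (rewrite Hg0; assert (0 < k*k) by (apply Rmult_lt_0_compat; lra); lra).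
        destruct (Ranalysis5.IVT_interv (fun t => - (g t * g t - k * k)) th 0 A1 Hn A2 A3) as [z [Hz1 Hz2]].
        exists z. split. lra. lra.
      - subst th. rewrite Hg0 in Hgth. assert (0 < k*k) by (apply Rmult_lt_0_compat; lra). lra.
      - assert (A1 : forall a, 0 <= a <= th -> continuity_pt (fun t => g t * g t - k * k) a) by (intros; apply Hcont; lra).
        assert (A2 : g 0 * g 0 - k * k < 0) by (rewrite Hg0; assert (0 < k*k) by (apply Rmult_lt_0_compat; lra); lra).
        assert (A3 : 0 < g th * g th - k * k) by lra.
        destruct (Ranalysis5.IVT_interv (fun t => g t * g t - k * k) 0 th A1 Hp A2 A3) as [z [Hz1 Hz2]].
        exists z. split. lra. lra. }
    destruct Hz as [z [Hz Hgz]].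
    assert (Hgzk : Rabs (g z) = k).
    { assert (0 <= k) by (unfold k; lra).
      assert (E : Rabs (g z) * Rabs (g z) = k * k).
      { rewrite <- Rabs_mult, Hgz. apply Rabs_right. apply Rle_ge, Rmult_le_pos; lra. }
      pose proof (Rabs_pos (g z)).
      destruct (Rtotal_order (Rabs (g z)) k) as [Hl|[He|Hg']]; auto.
      - assert (Rabs (g z) * Rabs (g z) < k * k) by (apply Rmult_le_0_lt_compat; lra). lra.
      - assert (k * k < Rabs (g z) * Rabs (g z)) by (apply Rmult_le_0_lt_compat; lra). lra. }
    assert (Hgz2 : g z = gm z) by (apply Small; auto; unfold k in Hgzk; lra).
    destruct (Hall z (Hin z Hz)) as [_ [_ [Hgm _]]]. rewrite Hg00, Rminus_0_r in Hgm.
    rewrite <- Hgz2, Hgzk in Hgm. unfold k in Hgm. lra.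
  -
    intros x Hx. apply DB_pseries. apply DBth; auto.
  -
    intros th Hth.
    assert (Hex : ex_derive gm th) by (apply DB_ex_derive, DBth; auto).
    pose proof (deriv_h t1 t2 t3 t4 gm th HN1 HN4 Hex) as Hd.
    assert (Hz : is_derive (fun t => f_comp t1 t2 t3 t4 (gm t) t) th 0).
    { apply (is_derive_ext_loc (fun _ => 0)).
      apply (filter_imp (Bl 0 eps)). intros t Ht. unfold Bl in Ht. rewrite Rminus_0_r in Ht.
      symmetry. apply Hsol. apply Rabs_def2 in Ht. lra.
      apply Bl_open. unfold Bl. rewrite Rminus_0_r. auto.
      apply (is_derive_const 0 th). }
    apply is_derive_unique in Hd. apply is_derive_unique in Hz. rewrite Hz in Hd.
    destruct (Hall th (Hin th Hth)) as [_ [[M1 _] _]].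
    assert (Ht1 : triple t1 (t2d t1 t2 (gm th)) (t3d t3 t4 th) <> 0).
    { intro Hc. unfold f_mv1 in M1. rewrite Hc in M1. lra. }
    assert (Hn1 : n1 t1 <> 0) by exact HN1. assert (Hn4 : n4 t4 <> 0) by exact HN4.
    rewrite (I1 t1 t2 t3 t4 Hn1 Hn4), (I2 t1 t2 t3 t4 Hn1 Hn4) in Hd.
    assert (HD : Derive gm th = vnorm t1 / vnorm t4 *
          (triple (t2d t1 t2 (gm th)) (t3d t3 t4 th) t4 /
           triple t1 (t2d t1 t2 (gm th)) (t3d t3 t4 th))).
    { unfold n1, n4 in Hd. 
      set (T1 := triple t1 (t2d t1 t2 (gm th)) (t3d t3 t4 th)) in *.
      set (T2 := triple (t2d t1 t2 (gm th)) (t3d t3 t4 th) t4) in *.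
      set (D := Derive gm th) in *.
      apply (Rmult_eq_reg_l (T1 / vnorm t1)). 2:{ unfold Rdiv. apply Rmult_integral_contrapositive_currified; auto. apply Rinv_neq_0_compat; auto. }
      replace (T1 / vnorm t1 * D) with (- (- T2 / vnorm t4)) by lra.
      field. repeat split; auto. }
    rewrite <- HD. apply Derive_correct. exact Hex.
Qed.
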